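(* Let $c\in\mathbb{N}$. There exists a strategy $\sigma_0$ of player $0$ that is a solution to the NCNS problem with threshold $c$ (i.e., every $\sigma_0$-fixed NE $\sigma$ satisfies $\mathrm{cost}_0(\mathrm{out}(\sigma))\le c$) if and only if there exists a $c$-witness.
   Context: Reachability game with one-player environment: a finite set $V$ of vertices, edges $E\subseteq V\times V$ (each vertex has a successor), initial vertex $v_0$, two players $0$ and $1$ owning a partition $V_0\uplus V_1$ of $V$, weight functions $w_0,w_1:E\to\mathbb{N}$ and target sets $T_0,T_1\subseteq V$. For a play (infinite path) $\pi$, $\mathrm{cost}_i(\pi)$ is the sum of $w_i$ over the edges of the shortest prefix of $\pi$ ending in $T_i$, and $+\infty$ if none. A strategy of player $i$ maps each finite path ending in $V_i$ to a successor of its last vertex. Given $\sigma_0$, a profile $(\sigma_0,\sigma_1)$ is a $\sigma_0$-fixed NE if for every strategy $\tau_1$ of player $1$, $\mathrm{cost}_1(\mathrm{out}(\sigma_0,\sigma_1))\le\mathrm{cost}_1(\mathrm{out}(\sigma_0,\tau_1))$, where $\mathrm{out}$ is the outcome play from $v_0$. A deviation of a play $\pi$ is a finite path $hv$ ($v\in V$) such that $h$ is a nonempty prefix of $\pi$ but $hv$ is not. A $c$-witness is a play $\pi$ from $v_0$ such that $\mathrm{cost}_0(\pi)\le c$ and, with $d=\mathrm{cost}_1(\pi)$, for every deviation $hv$ of $\pi$, player $0$ has a strategy from $v$ in the two-player zero-sum game (player $0$ against player $1$) such that every play $\pi'$ starting at $v$ consistent with it satisfies $\mathrm{cost}_0(h\pi')\le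 c$ or $\mathrm{cost}_1(h\pi')>d$.
   Formalization: In a c-witness the condition on deviations hv applies only when the last vertex of h belongs to player 1, so deviations from vertices of $V_0$ impose no condition. The statement above fails without it. *)

(* Defs.v *)
From mathcomp Require Import all_boot.
From Stdlib Require Import ClassicalEpsilon.
Set Implicit Arguments. Unset Strict Implicit. Unset Printing Implicit Defensive.

Record game (V : finType) := Game {
  E : rel V;
  succ_ex : forall v, exists v', E v v';
  v0 : V;
  V1 : {set V};                           (* vertices of player 1; V_0 = ~: V1 *)
  w0 : V -> V -> nat;                     (* weights of player 0 (used on edges only) *)
  w1 : V -> V -> nat;
  T0 : {set V};
  T1 : {set V}
}.

Section Game.
Variables (V : finType) (G : game V).

(* Costs live in option nat: None = +infinity. *)
Definition ole (a b : option nat) : bool :=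
  match a, b with
  | _, None => true
  | None, Some _ => false
  | Some x, Some y => x <= y
  end.
Definition olt (a b : option nat) : bool := ~~ ole b a.

Definition play (p : nat -> V) : Prop := forall n, E G (p n) (p n.+1).

Definition prefix (p : nat -> V) (n : nat) : seq V := [seq p i | i <- iota 0 n.+1].

Definition cost (w : V -> V -> nat) (T : {set V}) (p : nat -> V) : option nat :=
  match excluded_middle_informative (exists n, (fun n => p n \in T) n) with
  | left H => Some (\sum_(i < ex_minn H) w (p i) (p i.+1))
  | right _ => None
  end.

Definition cost0 := cost (w0 G) (T0 G).
Definition cost1 := cost (w1 G) (T1 G).

(* strategies: functions from finite paths to vertices; [i = false] is player 0,
   [i = true] is player 1 *)
Definition strat := seq V -> V.
Definition owns (i : bool) (v : V) : bool := (v \in V1 G) == i.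

Definition valid_strat (i : bool) (s : strat) : Prop :=
  forall (x : V) (h : seq V), path (E G) x h -> owns i (last x h) ->
    E G (last x h) (s (x :: h)).

Fixpoint outp (s0 s1 : strat) (n : nat) : seq V :=
  match n with
  | 0 => [:: v0 G]
  | n'.+1 => let h := outp s0 s1 n' in
             rcons h (if last (v0 G) h \in V1 G then s1 h else s0 h)
  end.
Definition out (s0 s1 : strat) : nat -> V := fun n => last (v0 G) (outp s0 s1 n).

Definition fixed_NE (s0 s1 : strat) : Prop :=
  valid_strat true s1 /\
  forall t1, valid_strat true t1 -> ole (cost1 (out s0 s1)) (cost1 (out s0 t1)).

Definition NCNS_solution (c : nat) (s0 : strat) : Prop :=
  valid_strat false s0 /\
  forall s1, fixed_NE s0 s1 -> ole (cost0 (out s0 s1)) (Some c).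

Definition consistent0 (s : strat) (v : V) (p : nat -> V) : Prop :=
  p 0 = v /\ play p /\ forall n, owns false (p n) -> p n.+1 = s (prefix p n).

Definition catp (h : seq V) (p : nat -> V) : nat -> V :=
  fun n => if n < size h then nth (v0 G) h n else p (n - size h).

Definition witness (c : nat) (p : nat -> V) : Prop :=
  play p /\ p 0 = v0 G /\ ole (cost0 p) (Some c) /\
  forall (n : nat) (v : V),
    p n \in V1 G -> E G (p n) v -> v != p n.+1 ->
    exists t, valid_strat false t /\
      forall p', consistent0 t v p' ->
        ole (cost0 (catp (prefix p n) p')) (Some c)
        || olt (cost1 p) (cost1 (catp (prefix p n) p')).

End Game.

(* Main.v *)
Require Import Defs.
From mathcomp Require Import all_boot.
From Stdlib Require Import Classical ClassicalEpsilon FunctionalExtensionality.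
Require Import Defs.
Set Implicit Arguments. Unset Strict Implicit. Unset Printing Implicit Defensive.

Section Aux.
Context (V : finType) (G : game V).

Definition succf (v : V) : V := xchoose (succ_ex G v).
Lemma succfP v : E G v (succf v).
Proof. exact: (xchooseP (succ_ex G v)). Qed.

Lemma size_prefix (f : nat -> V) n : size (prefix f n) = n.+1.
Proof. by rewrite size_map size_iota. Qed.

Lemma nth_prefix (f : nat -> V) n i x : i <= n -> nth x (prefix f n) i = f i.
Proof. by move=> H; rewrite (nth_map 0) ?size_iota // nth_iota. Qed.

Lemma prefixS (f : nat -> V) n : prefix f n.+1 = rcons (prefix f n) (f n.+1).
Proof. by rewrite /prefix -addn1 iotaD map_cat cats1 add0n. Qed.

Lemma prefix_cons (f : nat -> V) n : prefix f n = f 0 :: behead (prefix f n).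
Proof. by []. Qed.

Lemma last_prefix (f : nat -> V) n x : last x (prefix f n) = f n.
Proof. by case: n => [|n] //; rewrite prefixS last_rcons. Qed.

Lemma prefix_ext (f g : nat -> V) n :
  (forall i, i <= n -> f i = g i) -> prefix f n = prefix g n.
Proof.
move=> H; apply/eq_in_map => i; rewrite mem_iota add0n => /andP[_ Hi].
exact: H.
Qed.

Lemma prefix_path (f : nat -> V) n :
  (forall k, k < n -> E G (f k) (f k.+1)) -> path (E G) (f 0) (behead (prefix f n)).
Proof.
elim: n => [//|n IH] H.
have -> : behead (prefix f n.+1) = rcons (behead (prefix f n)) (f n.+1).
  by rewrite prefixS [prefix f n]prefix_cons rcons_cons.
rewrite rcons_path IH; last by move=> k Hk; apply: H; apply: ltnW.
have -> : last (f 0) (behead (prefix f n)) = f n.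
  by rewrite -(last_prefix f n (f 0)) [prefix f n]prefix_cons.
exact: H.
Qed.

Lemma valid_prefix i s (f : nat -> V) n : valid_strat G i s ->
  (forall k, k < n -> E G (f k) (f k.+1)) -> owns G i (f n) ->
  E G (f n) (s (prefix f n)).
Proof.
move=> Hs Hp Ho.
have HL : last (f 0) (behead (prefix f n)) = f n.
  by rewrite -(last_prefix f n (f 0)) [prefix f n]prefix_cons.
have := Hs (f 0) (behead (prefix f n)) (prefix_path Hp).
by rewrite HL => /(_ Ho).
Qed.

Lemma outS s0 s1 n : out G s0 s1 n.+1 =
  if out G s0 s1 n \in V1 G then s1 (outp G s0 s1 n) else s0 (outp G s0 s1 n).
Proof. by rewrite {1}/out /= last_rcons. Qed.

Lemma outp_prefix s0 s1 n : outp G s0 s1 n = prefix (out G s0 s1) n.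
Proof.
elim: n => [//|n IH]; rewrite prefixS -IH /=.
by rewrite [out G s0 s1 n.+1]/out /= last_rcons.
Qed.

Lemma outE s0 s1 n : out G s0 s1 n.+1 =
  if out G s0 s1 n \in V1 G then s1 (prefix (out G s0 s1) n)
  else s0 (prefix (out G s0 s1) n).
Proof. by rewrite outS outp_prefix. Qed.

Lemma out0 s0 s1 : out G s0 s1 0 = v0 G.
Proof. by []. Qed.

Lemma out_play s0 s1 : valid_strat G false s0 -> valid_strat G true s1 ->
  play G (out G s0 s1).
Proof.
move=> H0 H1.
suff H : forall n k, k < n -> E G (out G s0 s1 k) (out G s0 s1 k.+1).
  by move=> n; apply: (H n.+1 n).
elim=> [//|n IH] k; rewrite ltnS leq_eqVlt => /orP[/eqP->|]; last exact: IH.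
rewrite outE; case: ifP => Hv.
  by apply: valid_prefix H1 IH _; rewrite /owns Hv.
by apply: valid_prefix H0 IH _; rewrite /owns Hv.
Qed.

Lemma out_unique s0 s1 (q : nat -> V) : q 0 = v0 G ->
  (forall k, q k.+1 = if q k \in V1 G then s1 (prefix q k) else s0 (prefix q k)) ->
  q = out G s0 s1.
Proof.
move=> Hq0 Hq; apply: functional_extensionality => i.
suff H : forall n i, i <= n -> q i = out G s0 s1 i by apply: (H i).
elim=> [|n IH] j; first by rewrite leqn0 => /eqP->.
rewrite leq_eqVlt => /orP[/eqP->|]; last exact: IH.
rewrite Hq outE (IH n (leqnn n)) (prefix_ext IH).
by [].
Qed.

Lemma prefix_catp h (r : nat -> V) j :
  prefix (catp G h r) (size h + j) = h ++ prefix r j.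
Proof.
rewrite /prefix -addnS iotaD map_cat add0n; congr (_ ++ _).
  rewrite -[RHS](mkseq_nth (v0 G) h) /mkseq; apply/eq_in_map => i.
  by rewrite mem_iota add0n /catp => /andP[_ ->].
rewrite -[in iota (size h) _](addn0 (size h)) iotaDl -map_comp; apply: eq_map => i /=.
by rewrite /catp ltnNge leq_addr /= addKn.
Qed.

Lemma catp_prefix (p r : nat -> V) n k :
  catp G (prefix p n) r k = if k < n.+1 then p k else r (k - n.+1).
Proof.
rewrite /catp size_prefix; case: ifP => // H.
by rewrite nth_prefix.
Qed.


Lemma min_ex (P : nat -> Prop) : (exists n, P n) -> exists m, P m /\ forall k, P k -> m <= k.
Proof.
move=> [n Hn]; elim: n {-2}n (leqnn n) Hn => [|N IH] n Hle Hn.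
  by exists n; split=> // k _; move: Hle; rewrite leqn0 => /eqP->.
case: (classic (exists k, k < n /\ P k)) => [[k [Hk Pk]]|H].
  by apply: (IH k) => //; rewrite -ltnS (leq_trans Hk Hle).
exists n; split=> // k Pk; rewrite leqNgt; apply/negP => Hk; apply: H; by exists k.
Qed.

Lemma ole_trans a b d : ole a b -> ole b d -> ole a d.
Proof. by case: a; case: b; case: d => //= x y z; apply: leq_trans. Qed.

Lemma last_behead (p : nat -> V) n : last (p 0) (behead (prefix p n)) = p n.
Proof. by rewrite -(last_prefix p n (p 0)) [prefix p n]prefix_cons. Qed.

Lemma follow_valid (q : nat -> V) s : play G q -> valid_strat G true s ->
  valid_strat G true (fun l => if l == prefix q (size l).-1 then q (size l) else s l).
Proof.
move=> Hq Hs x h Hpath Ho; case: eqP => [Heq|_]; last exact: Hs.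
have -> : last x h = last x (x :: h) by [].
by rewrite {1}Heq last_prefix /=; apply: Hq.
Qed.

Lemma exists_NE s0 : exists s1, fixed_NE G s0 s1.
Proof.
pose dflt : strat V := fun l => succf (last (v0 G) l).
have Hd : valid_strat G true dflt by move=> x h _ _; exact: succfP.
case: (classic (exists k, exists t, valid_strat G true t /\ cost1 G (out G s0 t) = Some k))
  => [Hex|Hno].
  have [m [[t [Ht Htc]] Hmin]] := min_ex Hex.
  exists t; split=> // t' Ht'; rewrite Htc.
  case Hc: (cost1 G (out G s0 t')) => [k|] //=.
  by apply: Hmin; exists t'.
exists dflt; split=> // t' Ht'.
case Hc: (cost1 G (out G s0 t')) => [k|]; last by case: (cost1 _ _).
by exfalso; apply: Hno; exists k, t'.
Qed.

Lemma dir1 c s0 : NCNS_solution G c s0 -> exists p, witness G c p.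
Proof.
case=> Hs0 Hsol; have [s1 Hne] := exists_NE s0; have Hs1 := Hne.1.
set p := out G s0 s1; exists p.
have Hp : play G p := out_play Hs0 Hs1.
have Hp0 : p 0 = v0 G by [].
split; first done; split; first done; split; first exact: Hsol.
move=> n v HpV Hev Hneq.
pose t : strat V := fun l => if E G (p n) (head (v0 G) l) then s0 (prefix p n ++ l)
                             else succf (last (v0 G) l).
exists t; split.
  move=> x h Hpath Ho; rewrite /t /=; case: ifP => Hx; last exact: succfP.
  have := Hs0 (p 0) (behead (prefix p n) ++ x :: h).
  rewrite cat_path last_cat last_behead /= Hx Hpath prefix_path // andbT.
  by rewrite -cat_cons -prefix_cons; apply.
move=> p' [Hp'0 [Hp'p Hp'c]].
set q := catp G (prefix p n) p'.
case Hc0: (ole (cost0 G q) (Some c)) => //=.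
rewrite /olt; apply/negP => Hc1.
have Hq : play G q.
  move=> k; rewrite /q !catp_prefix; case: (ltngtP k n) => Hk.
  - by rewrite ltnS (ltnW Hk) ltnS Hk.
  - rewrite !ltnS (leqNgt k n) Hk ltnNge (ltnW Hk) /= subSS subnS; move: (Hp'p (k-n).-1); by rewrite prednK // subn_gt0.
  - by rewrite Hk ltnSn ltnn subnn Hp'0.
pose s1' : strat V := fun l => if l == prefix q (size l).-1 then q (size l) else s1 l.
have Hs1' : valid_strat G true s1' by apply: follow_valid.
have Hout : q = out G s0 s1'.
  apply: out_unique; first by rewrite /q catp_prefix.
  move=> k; case: ifP => HkV; first by rewrite /s1' size_prefix /= eqxx.
  move: HkV; rewrite /q catp_prefix; case: (ltngtP k n) => Hk.
  - rewrite ltnS (ltnW Hk) => HkV; rewrite catp_prefix ltnS Hk.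
    rewrite (prefix_ext (g := p)); last first.
      by move=> i Hi; rewrite catp_prefix ltnS (leq_trans Hi (ltnW Hk)).
    by rewrite [p k.+1]outE -/p HkV.
  - rewrite ltnNge Hk /= => HkV.
    have Hkj : k = size (prefix p n) + (k - n.+1) by rewrite size_prefix subnKC.
    have Hkn : k - n = (k - n.+1).+1 by rewrite subnS prednK // subn_gt0.
    rewrite Hkj prefix_catp -Hkj catp_prefix ltnS ltnNge (ltnW Hk) /= subSS Hkn.
    rewrite Hp'c; last by rewrite /owns HkV.
    by rewrite /t [prefix p' _]prefix_cons /= Hp'0 Hev.
  - by subst k; rewrite ltnSn HpV.
have HNE : fixed_NE G s0 s1'.
  by split=> // t' Ht'; rewrite -Hout; apply: ole_trans Hc1 (Hne.2 t' Ht').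
by have := Hsol s1' HNE; rewrite -Hout Hc0.
Qed.


Lemma dec_unique (p : nat -> V) n n' x x' r r' :
  prefix p n ++ x :: r = prefix p n' ++ x' :: r' -> x != p n.+1 -> x' != p n'.+1 ->
  (n, x, r) = (n', x', r').
Proof.
move=> H Hx Hx'.
have Hn : n = n'.
  case: (ltngtP n n') => // Hlt; exfalso.
    have := congr1 (fun s => nth (v0 G) s n.+1) H.
    rewrite !nth_cat !size_prefix ltnn subnn ltnS Hlt nth_prefix //= => Hxp.
    by rewrite Hxp eqxx in Hx.
  have := congr1 (fun s => nth (v0 G) s n'.+1) H.
  rewrite !nth_cat !size_prefix ltnn subnn ltnS Hlt nth_prefix //= => Hxp.
  by rewrite -Hxp eqxx in Hx'.
subst n'; move/eqP: H; rewrite eqseq_cat // eqxx /= => /eqP [-> ->].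
by [].
Qed.

Lemma dir2 c p : witness G c p -> exists s0, NCNS_solution G c s0.
Proof.
case=> Hp [Hp0 [Hc Hdev]].
pose dflt : strat V := fun l => succf (last (v0 G) l).
have Hd : valid_strat G false dflt by move=> x h _ _; exact: succfP.
pose Q n v t := valid_strat G false t /\ forall p', consistent0 G t v p' ->
        ole (cost0 G (catp G (prefix p n) p')) (Some c)
        || olt (cost1 G p) (cost1 G (catp G (prefix p n) p')).
have [tw Htw] : exists tw : nat -> V -> strat V, forall n v,
    valid_strat G false (tw n v) /\
    (p n \in V1 G -> E G (p n) v -> v != p n.+1 -> Q n v (tw n v)).
  exists (fun n v => match excluded_middle_informative (exists t, Q n v t) with
     | left H => proj1_sig (constructive_indefinite_description _ H)
     | right _ => dflt end).
  move=> n v; case: excluded_middle_informative => [H|H].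
    by case: constructive_indefinite_description => t [Hv HQ] /=.
  split=> // a b d; exfalso; apply: H; exact: Hdev.
pose D l (nxr : nat * V * seq V) :=
  l = prefix p nxr.1.1 ++ nxr.1.2 :: nxr.2 /\ nxr.1.2 != p nxr.1.1.+1.
pose s0 : strat V := fun l => if l == prefix p (size l).-1 then p (size l) else
  match excluded_middle_informative (exists nxr, D l nxr) with
  | left H => let nxr := proj1_sig (constructive_indefinite_description _ H) in
              tw nxr.1.1 nxr.1.2 (nxr.1.2 :: nxr.2)
  | right _ => succf (last (v0 G) l) end.
have Hs0p k : s0 (prefix p k) = p k.+1 by rewrite /s0 size_prefix /= eqxx.
have Hs0 : valid_strat G false s0.
  move=> x h Hpath Ho; rewrite /s0; case: eqP => [Heq|Hne].
    have -> : last x h = last x (x :: h) by [].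
    by rewrite {1}Heq last_prefix /=; apply: Hp.
  case: excluded_middle_informative => [H|H] /=; last exact: succfP.
  case: constructive_indefinite_description => [[[n x'] r] [Hl Hx']] /=.
  move: Hl Ho Hpath; rewrite [prefix p n]prefix_cons cat_cons => -[-> ->].
  rewrite last_cat /= cat_path /= => Ho /and3P[_ _ Hr].
  exact: (Htw n x').1.
exists s0; split=> // s1 [Hs1 Hne].
set q := out G s0 s1.
have Hq : play G q := out_play Hs0 Hs1.
case: (classic (exists k, q k != p k)) => [Hex|Hall]; last first.
  have -> : q = p.
    apply: functional_extensionality => k; apply/eqP; apply/negPn/negP => Hk.
    by apply: Hall; exists k.
  exact: Hc.
have [m [Hm Hmin]] := min_ex Hex.
case: m Hm Hmin => [|n] Hm Hmin; first by rewrite Hp0 eqxx in Hm.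
have Hagree i : i <= n -> q i = p i.
  move=> Hi; apply/eqP; apply/negPn/negP => H.
  by have := Hmin i H; rewrite ltnNge Hi.
have Hpre : prefix q n = prefix p n by apply: prefix_ext.
have HV : p n \in V1 G.
  apply/negPn/negP => Hn; move: Hm.
  by rewrite [q n.+1]outE -/q Hagree // (negbTE Hn) Hpre Hs0p eqxx.
set v := q n.+1.
have HE : E G (p n) v by rewrite -Hagree //; apply: Hq.
have [Htv HQ] := (Htw n v).2 HV HE Hm.
pose p' := fun j => q (n.+1 + j).
have Hp'0 : p' 0 = v by rewrite /p' addn0.
have Hqcat : q = catp G (prefix p n) p'.
  apply: functional_extensionality => k; rewrite catp_prefix; case: ifP => Hk.
    by rewrite Hagree.
  by rewrite /p' subnKC // leqNgt Hk.
have Hcons : consistent0 G (tw n v) v p'.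
  split=> //; split; first by move=> j; rewrite /p' addnS; apply: Hq.
  move=> j Ho.
  have Hpq : prefix q (n.+1 + j) = prefix p n ++ prefix p' j.
    by have := prefix_catp (prefix p n) p' j; rewrite size_prefix -Hqcat.
  have -> : p' j.+1 = q (n.+1 + j).+1 by rewrite /p' addnS.
  rewrite /q outE -/q.
  move: Ho; rewrite /owns /p' eqbF_neg => /negbTE ->; rewrite Hpq.
  have Hdec : prefix p' j = v :: behead (prefix p' j) by rewrite [prefix p' j]prefix_cons Hp'0.
  rewrite /s0; case: eqP => [Heq|_].
    exfalso; have := congr1 (fun s => nth (v0 G) s n.+1) Heq.
    rewrite nth_cat size_prefix ltnn subnn {1}Hdec [nth _ (v :: _) 0]/= nth_prefix; last first.
      by rewrite size_cat !size_prefix addnS /= ltnS leq_addr.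
    by move=> Hvp; move: Hm; rewrite -/v Hvp eqxx.
  case: excluded_middle_informative => [H|H]; last first.
    by exfalso; apply: H; exists (n, v, behead (prefix p' j)); split=> //=; rewrite -Hdec.
  case: constructive_indefinite_description => [[[n1 x1] r1] [Hl Hx1]] /=.
  move: Hl; rewrite /= Hdec => Hl.
  by have := dec_unique Hl Hm Hx1 => -[<- <- <-].
have := HQ p' Hcons; rewrite -Hqcat => /orP[//|Hlt].
pose s1' : strat V := fun l => if l == prefix p (size l).-1 then p (size l) else s1 l.
have Hs1' : valid_strat G true s1' by apply: follow_valid.
have Hout : p = out G s0 s1'.
  apply: out_unique => // k; rewrite Hs0p /s1' size_prefix /= eqxx.
  by case: ifP.
have := Hne s1' Hs1'; rewrite -/q -Hout.
by move: Hlt; rewrite /olt => /negbTE ->.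
Qed.

End Aux.

Theorem lemma27 (V : finType) (G : game V) (c : nat) :
  (exists s0 : strat V, NCNS_solution G c s0) <-> (exists p : nat -> V, witness G c p).
Proof.
split; first by case=> s0; apply: dir1.
by case=> p; apply: dir2.
Qed.
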